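(* Along the principal part of any cohomogeneity one gradient Ricci soliton of class $C^3$ as in the context, the function $$\mathscr F:=v^{2/n}\big(S+\mathrm{tr}((L^{(0)})^2)\big)$$ satisfies $$\dot{\mathscr F}=-2\,v^{2/n}\,\mathrm{tr}\big((L^{(0)})^2\big)\Big(\xi-\tfrac{1}{n}\mathrm{tr}L\Big).$$ In particular $\mathscr F$ is non-decreasing on any interval where $\xi\le\frac1n\mathrm{tr}L$.
   Context: Setup: $G$ compact Lie group acting isometrically with cohomogeneity one on $(M^{n+1},\bar g)$, principal orbit $G/K$ of dimension $n$; $u$ $G$-invariant with $\mathrm{Ric}(\bar g)+\mathrm{Hess}\,u+\frac{\epsilon}{2}\bar g=0$. On the principal part $I\times G/K$, $\bar g=dt^2+g_t$, $u=u(t)$; $L$ is the shape operator ($\dot g_t=2g_tL$), $L^{(0)}=L-\frac{\mathrm{tr}L}{n}\mathrm I$ its trace-free part, $S$ the scalar curvature of $g_t$, $v(t)=\sqrt{\det g_t}$ the relative volume with respect to a fixed $G$-invariant background metric on $G/K$ (so $\dot v=(\mathrm{tr}L)v$), $\xi=-\dot u+\mathrm{tr}L$. The equations $r_t-\dot L+(\dot u-\mathrm{tr}L)L+\frac{\epsilon}{2}\mathrm I=0$, $-\mathrm{tr}\dot L-\mathrm{tr}(L^2)+\ddot u+\frac{\epsilon}{2}=0$ and the conservation law $\ddot u+(-\dot u+\mathrm{tr}L)\dot u-\epsilon u=C$ ($C$ constant) hold, where $r_t$ is the Ricci endomorphism of $g_t$. *)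

(* Defs.v *)
From Stdlib Require Import Reals Lra.
Open Scope R_scope.

Fixpoint rsum (n : nat) (f : nat -> R) : R :=
  match n with
  | O => 0
  | S k => rsum k f + f k
  end.

Definition mat := nat -> nat -> R.

Definition delta (i j : nat) : R := if Nat.eqb i j then 1 else 0.

Definition mmul (n : nat) (A B : mat) : mat :=
  fun i j => rsum n (fun k => A i k * B k j).

Definition mtr (n : nat) (A : mat) : R := rsum n (fun i => A i i).

Definition minor (A : mat) (j : nat) : mat :=
  fun r c => A (S r) (if Nat.ltb c j then c else S c).

Fixpoint det (n : nat) (A : mat) : R :=
  match n with
  | O => 1
  | S k => rsum (S k) (fun j => (-1) ^ j * A O j * det k (minor A j))
  end.

Definition tracefree (n : nat) (A : mat) : mat :=
  fun i j => A i j - mtr n A / INR n * delta i j.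

(* g = Lie(G) has basis e_0 .. e_(n+m-1) with structure constants c:   *)
(*   [e_i, e_j] = sum_k c i j k e_k.                                   *)
(* p = span(e_0..e_(n-1)) is the reductive complement (identified with *)
(* the tangent space of G/K at eK), k = span(e_n..e_(n+m-1)) = Lie(K). *)
(* e_0..e_(n-1) is orthonormal for the fixed G-invariant background    *)
(* metric on G/K.                                                      *)

Definition is_lie_algebra (N : nat) (c : nat -> nat -> nat -> R) : Prop :=
  (forall i j k, (i < N)%nat -> (j < N)%nat -> (k < N)%nat ->
     c i j k = - c j i k) /\
  (forall i j k r, (i < N)%nat -> (j < N)%nat -> (k < N)%nat -> (r < N)%nat ->
     rsum N (fun l => c i j l * c l k r + c j k l * c l i r + c k i l * c l j r) = 0).

(* G compact (at the Lie algebra level): g carries an ad-invariant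
   positive definite inner product Q. *)
Definition compact_type (N : nat) (c : nat -> nat -> nat -> R) : Prop :=
  exists Q : mat,
    (forall i j, (i < N)%nat -> (j < N)%nat -> Q i j = Q j i) /\
    (forall x : nat -> R, (exists i, (i < N)%nat /\ x i <> 0) ->
       rsum N (fun i => rsum N (fun j => x i * Q i j * x j)) > 0) /\
    (forall i j k, (i < N)%nat -> (j < N)%nat -> (k < N)%nat ->
       rsum N (fun l => c i j l * Q l k) + rsum N (fun l => c i k l * Q j l) = 0).

(* k is a subalgebra and [k, p] ⊆ p (reductive decomposition). *)
Definition reductive (n m : nat) (c : nat -> nat -> nat -> R) : Prop :=
  (forall a b i, (n <= a < n + m)%nat -> (n <= b < n + m)%nat -> (i < n)%nat ->
     c a b i = 0) /\
  (forall a i b, (n <= a < n + m)%nat -> (i < n)%nat -> (n <= b < n + m)%nat ->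
     c a i b = 0).

(* An inner product on p (Gram matrix h in the basis e_0..e_(n-1)) is
   ad(k)-invariant, i.e. it defines a G-invariant metric on G/K
   (at the Lie algebra level). *)
Definition k_invariant (n m : nat) (c : nat -> nat -> nat -> R) (h : mat) : Prop :=
  forall a i j, (n <= a < n + m)%nat -> (i < n)%nat -> (j < n)%nat ->
    rsum n (fun k => c a i k * h k j) + rsum n (fun k => c a j k * h i k) = 0.

Definition sym_posdef (n : nat) (h : mat) : Prop :=
  (forall i j, (i < n)%nat -> (j < n)%nat -> h i j = h j i) /\
  (forall x : nat -> R, (exists i, (i < n)%nat /\ x i <> 0) ->
     rsum n (fun i => rsum n (fun j => x i * h i j * x j)) > 0).

Definition killing (N : nat) (c : nat -> nat -> nat -> R) (a b : nat) : R :=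
  rsum N (fun k => rsum N (fun l => c a k l * c b l k)).

(* Ricci tensor (as bilinear form, Gram matrix in e_0..e_(n-1)) of the
   G-invariant metric on G/K with Gram matrix h (inverse hinv), given by
   the standard formula for G unimodular (Besse, Einstein Manifolds, 7.38):
   Ric(X,Y) = -1/2 sum_i h([X,X_i]_p,[Y,X_i]_p) - 1/2 B(X,Y)
              + 1/4 sum_{i,j} h([X_i,X_j]_p,X) h([X_i,X_j]_p,Y),
   (X_i) an h-orthonormal basis of p. *)
Definition ricci_form (n m : nat) (c : nat -> nat -> nat -> R) (h hinv : mat) : mat :=
  fun a b =>
    - / 2 * rsum n (fun i => rsum n (fun j => hinv i j *
              rsum n (fun k => rsum n (fun l => c a i k * c b j l * h k l))))
    - / 2 * killing (n + m) c a b
    + / 4 * rsum n (fun i => rsum n (fun i' => rsum n (fun j => rsum n (fun j' =>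
              hinv i i' * hinv j j' *
              rsum n (fun k => c i j k * h k a) *
              rsum n (fun k => c i' j' k * h k b))))).

Definition ricci_endo (n m : nat) (c : nat -> nat -> nat -> R) (h hinv : mat) : mat :=
  mmul n hinv (ricci_form n m c h hinv).

Definition scal (n m : nat) (c : nat -> nat -> nat -> R) (h hinv : mat) : R :=
  mtr n (ricci_endo n m c h hinv).

(* Main.v *)
Require Import Defs.
From Stdlib Require Import Reals Lra Lia.
From Stdlib Require Import ClassicalEpsilon Classical.
Open Scope R_scope.

Lemma rsum_ext n f g : (forall i, (i < n)%nat -> f i = g i) -> rsum n f = rsum n g.
Proof. induction n; simpl; intros H; [reflexivity|]. rewrite IHn by (intros; apply H; lia). rewrite H by lia. reflexivity. Qed.

Lemma rsum_plus n f g : rsum n (fun i => f i + g i) = rsum n f + rsum n g.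
Proof. induction n; simpl; [ring|]. rewrite IHn; ring. Qed.

Lemma rsum_minus n f g : rsum n (fun i => f i - g i) = rsum n f - rsum n g.
Proof. induction n; simpl; [ring|]. rewrite IHn; ring. Qed.

Lemma rsum_opp n f : rsum n (fun i => - f i) = - rsum n f.
Proof. induction n; simpl; [ring|]. rewrite IHn; ring. Qed.

Lemma rsum_scal_l n a f : rsum n (fun i => a * f i) = a * rsum n f.
Proof. induction n; simpl; [ring|]. rewrite IHn; ring. Qed.

Lemma rsum_scal_r n a f : rsum n (fun i => f i * a) = rsum n f * a.
Proof. induction n; simpl; [ring|]. rewrite IHn; ring. Qed.

Lemma rsum_zero n f : (forall i, (i < n)%nat -> f i = 0) -> rsum n f = 0.
Proof. intros H. transitivity (rsum n (fun _ => 0)). apply rsum_ext; auto.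
  induction n; simpl; [reflexivity|]. rewrite IHn; [ring|]. intros; apply H; lia. Qed.

Lemma rsum_comm n m (f : nat -> nat -> R) :
  rsum n (fun i => rsum m (fun j => f i j)) = rsum m (fun j => rsum n (fun i => f i j)).
Proof. induction n; simpl.
  - symmetry; apply rsum_zero; reflexivity.
  - rewrite IHn. rewrite <- rsum_plus. reflexivity. Qed.

Lemma rsum_shift n f : rsum (S n) f = f O + rsum n (fun i => f (S i)).
Proof. induction n; simpl in *; [ring|]. rewrite IHn. ring. Qed.

Lemma delta_eq i : delta i i = 1.
Proof. unfold delta. rewrite Nat.eqb_refl. reflexivity. Qed.
Lemma delta_neq i j : i <> j -> delta i j = 0.
Proof. intros H. unfold delta. destruct (Nat.eqb_spec i j); [contradiction|reflexivity]. Qed.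
Lemma delta_sym i j : delta i j = delta j i.
Proof. unfold delta. rewrite Nat.eqb_sym. reflexivity. Qed.

Lemma rsum_delta_l n i f : (i < n)%nat -> rsum n (fun j => delta i j * f j) = f i.
Proof. induction n; intros H; [lia|]. simpl. destruct (Nat.eq_dec i n).
  - subst. rewrite rsum_zero. rewrite delta_eq; ring. intros j Hj. rewrite delta_neq by lia. ring.
  - rewrite IHn by lia. rewrite delta_neq by lia. ring. Qed.

Lemma rsum_delta_r n i f : (i < n)%nat -> rsum n (fun j => f j * delta j i) = f i.
Proof. intros H. rewrite <- (rsum_delta_l n i f H). apply rsum_ext. intros. rewrite delta_sym. ring. Qed.

Lemma rsum_const n a : rsum n (fun _ => a) = INR n * a.
Proof. induction n; simpl rsum; [simpl; ring|]. rewrite IHn, S_INR. ring. Qed.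

Lemma D_ext_loc f g t l : (exists d, 0 < d /\ forall s, Rabs (s - t) < d -> f s = g s) ->
  derivable_pt_lim f t l -> derivable_pt_lim g t l.
Proof.
  intros [d [Hd Hfg]] Hf eps Heps. destruct (Hf eps Heps) as [del Hdel].
  assert (Hm : 0 < Rmin del d) by (apply Rmin_pos; [apply cond_pos|lra]).
  exists (mkposreal _ Hm). intros h Hh0 Hh. simpl in Hh.
  rewrite <- !Hfg. apply Hdel; auto. apply Rlt_le_trans with (1 := Hh), Rmin_l.
  - unfold Rminus; rewrite Rplus_opp_r, Rabs_R0; lra.
  - replace (t + h - t) with h by ring. apply Rlt_le_trans with (1 := Hh), Rmin_r.
Qed.

Lemma D_ext f g t l : (forall s, f s = g s) -> derivable_pt_lim f t l -> derivable_pt_lim g t l.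
Proof. intros H. apply D_ext_loc. exists 1. split; [lra|]. auto. Qed.

Lemma D_plus f g t a b : derivable_pt_lim f t a -> derivable_pt_lim g t b ->
  derivable_pt_lim (fun s => f s + g s) t (a + b).
Proof. intros. apply (derivable_pt_lim_plus f g); auto. Qed.

Lemma D_minus f g t a b : derivable_pt_lim f t a -> derivable_pt_lim g t b ->
  derivable_pt_lim (fun s => f s - g s) t (a - b).
Proof. intros. apply (derivable_pt_lim_minus f g); auto. Qed.

Lemma D_mult f g t a b : derivable_pt_lim f t a -> derivable_pt_lim g t b ->
  derivable_pt_lim (fun s => f s * g s) t (a * g t + f t * b).
Proof. intros. apply (derivable_pt_lim_mult f g); auto. Qed.

Lemma D_const c t : derivable_pt_lim (fun _ => c) t 0.
Proof. apply derivable_pt_lim_const. Qed.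

Lemma D_id t : derivable_pt_lim (fun s => s) t 1.
Proof. apply derivable_pt_lim_id. Qed.

Lemma D_scal c f t a : derivable_pt_lim f t a -> derivable_pt_lim (fun s => c * f s) t (c * a).
Proof. intros H. replace (c * a) with (0 * f t + c * a) by ring. apply D_mult; auto. apply D_const. Qed.

Lemma D_rsum n (f : R -> nat -> R) f' t :
  (forall i, (i < n)%nat -> derivable_pt_lim (fun s => f s i) t (f' i)) ->
  derivable_pt_lim (fun s => rsum n (f s)) t (rsum n f').
Proof. induction n; intros H; simpl.
  - apply D_const.
  - apply D_plus. apply IHn; intros; apply H; lia. apply H; lia. Qed.

Lemma D_uniq f t a b : derivable_pt_lim f t a -> derivable_pt_lim f t b -> a = b.
Proof. apply uniqueness_limite. Qed.

Lemma D_cont f t a : derivable_pt_lim f t a -> continuity_pt f t.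
Proof. intros H. apply derivable_continuous_pt. exists a. exact H. Qed.

Lemma D_eq f t a b : derivable_pt_lim f t a -> a = b -> derivable_pt_lim f t b.
Proof. intros H E; subst; exact H. Qed.

Lemma D_div f h t a b : derivable_pt_lim f t a -> derivable_pt_lim h t b -> h t <> 0 ->
  derivable_pt_lim (fun s => f s / h s) t ((a * h t - b * f t) / Rsqr (h t)).
Proof. intros. apply (derivable_pt_lim_div f h); auto. Qed.

Lemma rsum_sandwich n a b f : a * rsum n f * b = rsum n (fun e => a * f e * b).
Proof. rewrite <- rsum_scal_l, <- rsum_scal_r. apply rsum_ext; intros; ring. Qed.

Lemma D_exp_comp f t a : derivable_pt_lim f t a -> derivable_pt_lim (fun s => exp (f s)) t (exp (f t) * a).
Proof. intros H. apply (derivable_pt_lim_comp f exp t a (exp (f t))). exact H. apply derivable_pt_lim_exp. Qed.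

Lemma D_ln_comp f t a : 0 < f t -> derivable_pt_lim f t a -> derivable_pt_lim (fun s => ln (f s)) t (a / f t).
Proof. intros Hp H. unfold Rdiv. rewrite Rmult_comm. apply (derivable_pt_lim_comp f ln t a (/ f t)). exact H. apply derivable_pt_lim_ln; auto. Qed.

Lemma D_sqrt_comp f t a : 0 < f t -> derivable_pt_lim f t a -> derivable_pt_lim (fun s => sqrt (f s)) t (a / (2 * sqrt (f t))).
Proof. intros Hp H. unfold Rdiv. rewrite Rmult_comm. apply (derivable_pt_lim_comp f sqrt t a (/ (2 * sqrt (f t)))). exact H. apply derivable_pt_lim_sqrt; auto. Qed.

Lemma rsum_S n f : rsum (S n) f = rsum n f + f n.
Proof. reflexivity. Qed.


Lemma scal2 n a (f : nat -> nat -> R) :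
  a * rsum n (fun x => rsum n (fun y => f x y)) = rsum n (fun x => rsum n (fun y => a * f x y)).
Proof. rewrite <- rsum_scal_l. apply rsum_ext; intros. symmetry; apply rsum_scal_l. Qed.

Lemma scal3 n a (f : nat -> nat -> nat -> R) :
  a * rsum n (fun x => rsum n (fun y => rsum n (fun z => f x y z))) = rsum n (fun x => rsum n (fun y => rsum n (fun z => a * f x y z))).
Proof. rewrite <- rsum_scal_l. apply rsum_ext; intros. apply scal2. Qed.

Lemma scal4 n a (f : nat -> nat -> nat -> nat -> R) :
  a * rsum n (fun x => rsum n (fun y => rsum n (fun z => rsum n (fun w => f x y z w)))) = rsum n (fun x => rsum n (fun y => rsum n (fun z => rsum n (fun w => a * f x y z w)))).
Proof. rewrite <- rsum_scal_l. apply rsum_ext; intros. apply scal3. Qed.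

Lemma sum2_plus n0 (f f2 : nat -> nat -> R) :
  rsum n0 (fun i => rsum n0 (fun j => f i j + f2 i j)) = rsum n0 (fun i => rsum n0 (fun j => f i j)) + rsum n0 (fun i => rsum n0 (fun j => f2 i j)).
Proof. rewrite <- rsum_plus. apply rsum_ext; intros. apply rsum_plus. Qed.

Lemma sum2_lin4 n0 x y z (f1 f2 f3 f4 : nat -> nat -> R) :
  rsum n0 (fun i => rsum n0 (fun k => f1 i k + x * f2 i k + y * f3 i k + z * f4 i k)) =
  rsum n0 (fun i => rsum n0 (fun k => f1 i k)) + x * rsum n0 (fun i => rsum n0 (fun k => f2 i k))
  + y * rsum n0 (fun i => rsum n0 (fun k => f3 i k)) + z * rsum n0 (fun i => rsum n0 (fun k => f4 i k)).
Proof. rewrite !sum2_plus, !scal2. reflexivity. Qed.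

Lemma rsum_prod n f g : rsum n f * rsum n g = rsum n (fun i => rsum n (fun j => f i * g j)).
Proof. rewrite <- rsum_scal_r. apply rsum_ext; intros. rewrite <- rsum_scal_l. reflexivity. Qed.


Lemma out3 n (f : nat -> nat -> nat -> R) :
  rsum n (fun a => rsum n (fun b => rsum n (fun c => f a b c))) =
  rsum n (fun c => rsum n (fun a => rsum n (fun b => f a b c))).
Proof.
  transitivity (rsum n (fun a => rsum n (fun c => rsum n (fun b => f a b c)))).
  apply rsum_ext; intros; apply rsum_comm. apply rsum_comm.
Qed.

Lemma out4 n (f : nat -> nat -> nat -> nat -> R) :
  rsum n (fun a => rsum n (fun b => rsum n (fun c => rsum n (fun d => f a b c d)))) =
  rsum n (fun d => rsum n (fun a => rsum n (fun b => rsum n (fun c => f a b c d)))).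
Proof.
  transitivity (rsum n (fun a => rsum n (fun d => rsum n (fun b => rsum n (fun c => f a b c d))))).
  apply rsum_ext; intros; apply out3. apply rsum_comm.
Qed.

Lemma out5 n (f : nat -> nat -> nat -> nat -> nat -> R) :
  rsum n (fun a => rsum n (fun b => rsum n (fun c => rsum n (fun d => rsum n (fun e => f a b c d e))))) =
  rsum n (fun e => rsum n (fun a => rsum n (fun b => rsum n (fun c => rsum n (fun d => f a b c d e))))).
Proof.
  transitivity (rsum n (fun a => rsum n (fun e => rsum n (fun b => rsum n (fun c => rsum n (fun d => f a b c d e)))))).
  apply rsum_ext; intros; apply out4. apply rsum_comm.
Qed.

Lemma det_S k A : det (S k) A = rsum (S k) (fun j => (-1) ^ j * A O j * det k (minor A j)).
Proof. reflexivity. Qed.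

Lemma det_ext n A B : (forall i j, (i < n)%nat -> (j < n)%nat -> A i j = B i j) ->
  det n A = det n B.
Proof.
  revert A B; induction n; intros A B H; [reflexivity|]. rewrite !det_S.
  apply rsum_ext; intros j Hj. rewrite H by lia. f_equal.
  apply IHn. intros r c Hr Hc. unfold minor. apply H. lia.
  destruct (Nat.ltb c j); lia.
Qed.

Lemma det_delta n : det n delta = 1.
Proof.
  induction n; [reflexivity|]. rewrite det_S.
  rewrite rsum_shift. rewrite rsum_zero.
  - simpl. rewrite (det_ext n (minor delta 0) delta). rewrite IHn, delta_eq. ring.
    intros i j _ _. unfold minor. simpl. reflexivity.
  - intros i Hi. rewrite delta_neq by lia. ring.
Qed.

Lemma det_zero_col0 n A : (1 <= n)%nat -> (forall i, (i < n)%nat -> A i O = 0) -> det n A = 0.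
Proof.
  revert A; induction n; intros A Hn H; [lia|]. rewrite det_S.
  rewrite rsum_shift. rewrite H by lia. rewrite rsum_zero. ring.
  intros j Hj. rewrite IHn. ring. lia.
  intros i Hi. unfold minor. replace (Nat.ltb 0 (S j)) with true by (symmetry; apply Nat.ltb_lt; lia).
  apply H; lia.
Qed.

Lemma D_rsum_ex n (f : R -> nat -> R) t :
  (forall i, (i < n)%nat -> exists l, derivable_pt_lim (fun s => f s i) t l) ->
  exists l, derivable_pt_lim (fun s => rsum n (f s)) t l.
Proof. induction n; intros H; simpl.
  - exists 0. apply D_const.
  - destruct IHn as [l1 H1]. intros; apply H; lia. destruct (H n) as [l2 H2]. lia.
    exists (l1 + l2). apply D_plus; auto. Qed.

Lemma D_det_ex n (A : R -> mat) t :
  (forall i j, (i < n)%nat -> (j < n)%nat -> exists l, derivable_pt_lim (fun s => A s i j) t l) ->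
  exists l, derivable_pt_lim (fun s => det n (A s)) t l.
Proof.
  revert A; induction n; intros A H.
  - exists 0. apply D_ext with (fun _ => 1). reflexivity. apply D_const.
  - cut (exists l, derivable_pt_lim (fun s => rsum (S n) (fun j => (-1) ^ j * A s O j * det n (minor (A s) j))) t l).
    { intros [l Hl]; exists l; eapply D_ext; [|exact Hl]; intros; reflexivity. }
    apply D_rsum_ex. intros j Hj.
    destruct (H O j) as [l1 H1]; try lia.
    destruct (IHn (fun s => minor (A s) j)) as [l2 H2].
    { intros r c Hr Hc. unfold minor. apply H. lia. destruct (Nat.ltb c j); lia. }
    eexists. apply D_mult. apply D_scal. exact H1. exact H2.
Qed.

Lemma D_det_id n (A : R -> mat) Ad t :
  (forall i j, (i < n)%nat -> (j < n)%nat -> A t i j = delta i j) ->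
  (forall i j, (i < n)%nat -> (j < n)%nat -> derivable_pt_lim (fun s => A s i j) t (Ad i j)) ->
  derivable_pt_lim (fun s => det n (A s)) t (mtr n Ad).
Proof.
  revert A Ad; induction n; intros A Ad H0 H.
  - apply D_ext with (fun _ => 1). reflexivity. apply D_const.
  - apply D_ext with (fun s => (-1) ^ 0 * A s 0%nat 0%nat * det n (minor (A s) 0)
        + rsum n (fun j => (-1) ^ (S j) * A s 0%nat (S j) * det n (minor (A s) (S j)))).
    { intros s. rewrite det_S, rsum_shift. reflexivity. }
    unfold mtr. rewrite rsum_shift.
    replace (Ad 0%nat 0%nat + rsum n (fun i => Ad (S i) (S i)))
      with (((-1)^0 * Ad 0%nat 0%nat) * det n (minor (A t) 0) + ((-1)^0 * A t 0%nat 0%nat) * mtr n (minor Ad 0)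
            + rsum n (fun j => 0)).
    2:{ rewrite rsum_zero by auto. rewrite (H0 0%nat 0%nat) by lia. rewrite delta_eq.
        rewrite (det_ext n _ delta), det_delta. unfold mtr, minor. simpl. ring.
        intros i j Hi Hj. unfold minor. simpl. rewrite H0 by lia. reflexivity. }
    apply D_plus.
    + apply (D_mult (fun s => (-1)^0 * A s 0%nat 0%nat) (fun s => det n (minor (A s) 0))).
      apply (D_scal _ (fun s => A s 0%nat 0%nat)). apply H; lia.
      apply IHn. intros i j Hi Hj. unfold minor; simpl. rewrite H0 by lia. reflexivity.
      intros i j Hi Hj. unfold minor; simpl. apply H; lia.
    + apply D_rsum. intros j Hj.
      destruct (D_det_ex n (fun s => minor (A s) (S j)) t) as [l2 H2].
      { intros r c Hr Hc. unfold minor. eexists. apply H. lia. destruct (Nat.ltb c (S j)); lia. }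
      replace 0 with (((-1)^(S j) * Ad 0%nat (S j)) * det n (minor (A t) (S j)) + ((-1)^(S j) * A t 0%nat (S j)) * l2).
      2:{ rewrite H0 by lia. rewrite delta_neq by lia. rewrite det_zero_col0. ring. lia.
          intros i Hi. unfold minor. replace (Nat.ltb 0 (S j)) with true by (symmetry; apply Nat.ltb_lt; lia).
          rewrite H0 by lia. apply delta_neq; lia. }
      apply (D_mult (fun s => (-1)^(S j) * A s 0%nat (S j)) (fun s => det n (minor (A s) (S j)))).
      apply (D_scal _ (fun s => A s 0%nat (S j))). apply H; lia. exact H2.
Qed.
From mathcomp Require ssreflect ssrbool ssrfun eqtype ssrnat seq fintype bigop ssralg matrix.
From mathcomp Require Rstruct.

Definition sub (h : mat) (r c : nat) : mat :=
  fun a b => h (if Nat.ltb a r then a else S a) (if Nat.ltb b c then b else S b).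

Module MC.
Import ssreflect ssrbool ssrfun eqtype ssrnat seq fintype bigop ssralg matrix.
Import Rstruct. Import GRing.Theory.
Local Open Scope ring_scope.

Definition mx n (A : mat) : 'M[R]_n := \matrix_(i < n, j < n) A i j.

Lemma rsum_big n f : rsum n f = \sum_(i < n) f i.
Proof. elim: n => [|n IH]; first by rewrite big_ord0. by rewrite big_ord_recr /= -IH. Qed.

Lemma pow_exp (x : R) k : (x ^ k)%R = x ^+ k.
Proof. elim: k => [|k IH] //=. by rewrite exprS IH. Qed.

Lemma mx_det n A : \det (mx n A) = det n A.
Proof.
  elim: n A => [|k IH] A; first by rewrite det_mx00.
  rewrite (expand_det_row _ ord0).
  change (det k.+1 A) with (rsum k.+1 (fun j => (-1)^j * A O j * det k (minor A j)))%R.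
  rewrite rsum_big. apply: eq_bigr => j _.
  rewrite /cofactor !mxE -pow_exp.
  have -> : row' ord0 (col' j (mx k.+1 A)) = mx k (minor A j).
    apply/matrixP => r c. rewrite !mxE /minor /=.
    congr (A _ _). rewrite /bump. case: (ltnP c j) => H.
    - have -> : Nat.ltb c j = true by apply/Nat.ltb_lt/ltP. done.
    - have -> : Nat.ltb c j = false. apply/Nat.ltb_ge/leP. done. by rewrite add1n.
  rewrite IH add0n mulrA; congr (_ * _); exact: mulrC.
Qed.

Lemma bump_if (j c : nat) : bump j c = (if Nat.ltb c j then c else c.+1).
Proof.
  rewrite /bump. case: (ltnP c j) => H.
  - have -> : Nat.ltb c j = true by apply/Nat.ltb_lt/ltP. done.
  - have -> : Nat.ltb c j = false. apply/Nat.ltb_ge/leP. done. by rewrite add1n.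
Qed.

Lemma mx_mul n X Y : mx n (mmul n X Y) = mx n X *m mx n Y.
Proof. apply/matrixP => i j. rewrite !mxE /mmul rsum_big. apply: eq_bigr => k _. by rewrite !mxE. Qed.

Lemma det_mmul_mc n X Y : det n (mmul n X Y) = Rmult (det n X) (det n Y).
Proof. by rewrite -!mx_det mx_mul det_mulmx. Qed.

Lemma adj_mc k h hinv :
  (forall i j, (i < k.+1)%coq_nat -> (j < k.+1)%coq_nat -> mmul k.+1 h hinv i j = delta i j) ->
  forall i j, (i < k.+1)%coq_nat -> (j < k.+1)%coq_nat ->
    Rmult (det k.+1 h) (hinv i j) = Rmult (pow (Ropp R1) (i + j)) (det k (sub h j i)).
Proof.
  move=> Hinv i j Hi Hj.
  have HH : mx k.+1 h *m mx k.+1 hinv = 1%:M.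
    apply/matrixP => a b. rewrite -mx_mul !mxE Hinv; try by apply/ltP.
    rewrite /delta. case: (Nat.eqb_spec a b) => E.
    - have -> : a == b by apply/eqP/val_inj. done.
    - have -> : (a == b) = false. apply/negbTE/eqP => E2. apply: E. by rewrite E2. done.
  have Ei : (i < k.+1)%N by apply/ltP. have Ej : (j < k.+1)%N by apply/ltP.
  have A1 : \adj (mx k.+1 h) = \det (mx k.+1 h) *: mx k.+1 hinv.
    by rewrite -[\adj _]mulmx1 -HH mulmxA mul_adj_mx mul_scalar_mx.
  have := congr1 (fun M : 'M[R]_k.+1 => M (inord i) (inord j)) A1.
  rewrite !mxE /cofactor mx_det !inordK // => E.
  change (Rmult (det k.+1 h) (hinv i j)) with (det k.+1 h * hinv i j). rewrite -E.
  rewrite pow_exp addnC. congr (_ * _).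
  rewrite -mx_det. congr (\det _). apply/matrixP => a b. rewrite !mxE /sub /=.
  by rewrite !bump_if !inordK.
Qed.

Lemma det_posdef_mc n h :
  (forall x : nat -> R, (exists i, (i < n)%coq_nat /\ x i <> 0) ->
       Rgt (rsum n (fun i => rsum n (fun j => Rmult (Rmult (x i) (h i j)) (x j)))) 0) ->
  det n h <> 0.
Proof.
  move=> Hpos. rewrite -mx_det => /eqP /det0P [v vn0 vh].
  have [j0 Hj0] : exists j0 : 'I_n, v ord0 j0 != 0.
    apply/existsP. move: vn0. apply: contraR => /existsPn H. apply/eqP/matrixP => a b.
    rewrite (ord1 a) mxE. by move: (H b) => /negPn/eqP.
  pose x (i : nat) : R := if (i < n)%N then v ord0 (insubd j0 i) else 0.
  have Hins : forall a : 'I_n, insubd j0 (nat_of_ord a) = a by move=> a; apply/val_inj; rewrite val_insubd ltn_ord.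
  have Hx : exists i, (i < n)%coq_nat /\ x i <> 0.
    exists j0. split; first by apply/ltP. rewrite /x ltn_ord Hins. exact/eqP.
  have := Hpos x Hx. rewrite rsum_comm.
  have -> : rsum n (fun j => rsum n (fun i => Rmult (Rmult (x i) (h i j)) (x j))) = 0.
    rewrite rsum_big big1 // => j _.
    rewrite rsum_scal_r.
    have -> : rsum n (fun i => Rmult (x i) (h i j)) = (v *m mx n h) ord0 j.
      rewrite mxE rsum_big. apply: eq_bigr => i _. by rewrite /x ltn_ord Hins !mxE.
    rewrite vh mxE. exact: Rmult_0_l.
  move=> H0; exact: (Rgt_irrefl 0 H0).
Qed.
End MC.

Lemma det_mmul : forall n X Y, det n (mmul n X Y) = det n X * det n Y.
Proof. exact MC.det_mmul_mc. Qed.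
Lemma det_adj : forall k h hinv,
  (forall i j, (i < S k)%nat -> (j < S k)%nat -> mmul (S k) h hinv i j = delta i j) ->
  forall i j, (i < S k)%nat -> (j < S k)%nat ->
    det (S k) h * hinv i j = (-1) ^ (i + j) * det k (sub h j i).
Proof. exact MC.adj_mc. Qed.
Lemma det_posdef : forall n h,
  (forall x : nat -> R, (exists i, (i < n)%nat /\ x i <> 0) ->
       rsum n (fun i => rsum n (fun j => x i * h i j * x j)) > 0) ->
  det n h <> 0.
Proof. exact MC.det_posdef_mc. Qed.











Section Alg.
Variables (n : nat) (c : nat -> nat -> nat -> R) (P H : mat).

Definition cv x y (al : nat -> R) := rsum n (fun u => c x y u * al u).
Definition Qf (al be : nat -> R) :=
  rsum n (fun x => rsum n (fun x' => rsum n (fun y => rsum n (fun y' =>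
     P x x' * P y y' * cv x y al * cv x' y' be)))).
Definition col (M : mat) a := fun u => M u a.

Definition Wf (P1 P2 M : mat) := rsum n (fun a => rsum n (fun b => P1 a b *
   rsum n (fun i => rsum n (fun j => P2 i j * rsum n (fun k => rsum n (fun l => c b i k * c a j l * M k l)))))).

Lemma cv_lin x y (w : nat -> R) (A : nat -> nat -> R) :
  cv x y (fun u => rsum n (fun e => w e * A e u)) = rsum n (fun e => w e * cv x y (A e)).
Proof.
  unfold cv. transitivity (rsum n (fun u => rsum n (fun e => c x y u * (w e * A e u)))).
  apply rsum_ext; intros; rewrite rsum_scal_l; ring.
  rewrite rsum_comm. apply rsum_ext; intros. rewrite <- rsum_scal_l. apply rsum_ext; intros; ring.
Qed.

Lemma cv_ext x y al be : (forall u, (u < n)%nat -> al u = be u) -> cv x y al = cv x y be.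
Proof. intros; unfold cv; apply rsum_ext; intros; rewrite H0; auto. Qed.

Lemma Q_lin1 (w : nat -> R) (A : nat -> nat -> R) be :
  rsum n (fun e => w e * Qf (A e) be) = Qf (fun u => rsum n (fun e => w e * A e u)) be.
Proof.
  unfold Qf. symmetry.
  transitivity (rsum n (fun x => rsum n (fun x' => rsum n (fun y => rsum n (fun y' => rsum n (fun e =>
     w e * (P x x' * P y y' * cv x y (A e) * cv x' y' be))))))).
  { do 4 (apply rsum_ext; intros). rewrite cv_lin. rewrite rsum_sandwich.
    apply rsum_ext; intros; ring. }
  rewrite out5. apply rsum_ext; intros. rewrite scal4. reflexivity.
Qed.

Lemma Q_lin2 al (w : nat -> R) (B : nat -> nat -> R) :
  rsum n (fun e => w e * Qf al (B e)) = Qf al (fun u => rsum n (fun e => w e * B e u)).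
Proof.
  unfold Qf. symmetry.
  transitivity (rsum n (fun x => rsum n (fun x' => rsum n (fun y => rsum n (fun y' => rsum n (fun e =>
     w e * (P x x' * P y y' * cv x y al * cv x' y' (B e)))))))).
  { do 4 (apply rsum_ext; intros). rewrite cv_lin. rewrite <- rsum_scal_l.
    apply rsum_ext; intros; ring. }
  rewrite out5. apply rsum_ext; intros. rewrite scal4. reflexivity.
Qed.

Lemma Q_ext al al' be be' : (forall u, (u < n)%nat -> al u = al' u) -> (forall u, (u < n)%nat -> be u = be' u) ->
  Qf al be = Qf al' be'.
Proof. intros H1 H2. unfold Qf. do 4 (apply rsum_ext; intros). rewrite (cv_ext _ _ al al'), (cv_ext _ _ be be'); auto. Qed.

Definition Uf (M : mat) := rsum n (fun x => rsum n (fun x' => rsum n (fun y => rsum n (fun y' =>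
     P x x' * P y y' * rsum n (fun u => rsum n (fun v => c x y u * c x' y' v * M u v)))))).

Lemma Uf_ext M M' : (forall u v, (u < n)%nat -> (v < n)%nat -> M u v = M' u v) -> Uf M = Uf M'.
Proof. intros HM. unfold Uf. do 4 (apply rsum_ext; intros). f_equal. do 2 (apply rsum_ext; intros). rewrite HM; auto. Qed.

Lemma Q_delta_sum (M : mat) :
  rsum n (fun i => Qf (fun u => delta u i) (col M i)) = Uf (fun u v => M v u).
Proof.
  transitivity (rsum n (fun i => rsum n (fun x => rsum n (fun x' => rsum n (fun y => rsum n (fun y' =>
     P x x' * P y y' * (c x y i * cv x' y' (col M i)))))))).
  { apply rsum_ext; intros i Hi. unfold Qf. do 4 (apply rsum_ext; intros).
    unfold cv at 1. rewrite (rsum_delta_r n i (fun u => c _ _ u)); auto. ring. }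
  rewrite <- out5. unfold Uf. do 4 (apply rsum_ext; intros). rewrite <- rsum_scal_l. apply rsum_ext; intros u Hu.
  f_equal. f_equal. unfold cv, col. rewrite <- rsum_scal_l. apply rsum_ext; intros; ring.
Qed.
End Alg.

Section AlgH.
Variables (n : nat) (c : nat -> nat -> nat -> R) (P H Lm : mat).
Hypothesis Psym : forall a b, (a < n)%nat -> (b < n)%nat -> P a b = P b a.
Hypothesis Hsym : forall a b, (a < n)%nat -> (b < n)%nat -> H a b = H b a.
Hypothesis PH : forall a b, (a < n)%nat -> (b < n)%nat -> rsum n (fun k => P a k * H k b) = delta a b.
Hypothesis anti : forall x y z, (x < n)%nat -> (y < n)%nat -> (z < n)%nat -> c x y z = - c y x z.

Definition T1f a b := rsum n (fun i => rsum n (fun j => P i j * rsum n (fun k => rsum n (fun l => c a i k * c b j l * H k l)))).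
Definition T3f a b := Qf n c P (col H a) (col H b).
Definition trip (A : mat) := rsum n (fun i => rsum n (fun k => mmul n P A i k * Lm k i)).

Lemma W_eq_U M : Wf n c P P M = Uf n c P M.
Proof.
  unfold Wf, Uf. rewrite rsum_comm. do 2 (apply rsum_ext; intros). rewrite Psym by auto.
  rewrite scal2. do 2 (apply rsum_ext; intros). ring.
Qed.

Lemma sum_PT3 : rsum n (fun i => rsum n (fun k => P i k * T3f k i)) = Uf n c P H.
Proof.
  unfold T3f. transitivity (rsum n (fun i => Qf n c P (fun u => delta u i) (col H i))).
  { apply rsum_ext; intros i Hi. rewrite (Q_lin1 n c P (fun k => P i k) (fun k => col H k)).
    apply Q_ext; auto. intros u Hu. unfold col. rewrite delta_sym, <- PH by auto.
    apply rsum_ext; intros. rewrite (Hsym u); auto. }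
  rewrite Q_delta_sum. apply Uf_ext. intros; apply Hsym; auto.
Qed.

Lemma LP_trip (A : mat) : rsum n (fun a => rsum n (fun b => mmul n Lm P a b * A b a)) = trip A.
Proof.
  unfold trip, mmul.
  transitivity (rsum n (fun a => rsum n (fun b => rsum n (fun p => Lm a p * P p b * A b a)))).
  { do 2 (apply rsum_ext; intros). rewrite <- rsum_scal_r. reflexivity. }
  rewrite out3. do 2 (apply rsum_ext; intros). rewrite <- rsum_scal_r. apply rsum_ext; intros. ring.
Qed.

Lemma trip_T3 : (forall a b, (a < n)%nat -> (b < n)%nat -> mmul n H Lm a b = mmul n H Lm b a) ->
  trip T3f = Uf n c P (mmul n H Lm).
Proof.
  intros HL. unfold trip, T3f.
  transitivity (rsum n (fun i => rsum n (fun k => Lm k i * Qf n c P (fun u => delta u i) (col H k)))).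
  { apply rsum_ext; intros i Hi; apply rsum_ext; intros k Hk. unfold mmul.
    rewrite (Q_lin1 n c P (fun e => P i e) (fun e => col H e)). rewrite Rmult_comm. f_equal.
    apply Q_ext; auto. intros u Hu. unfold col. rewrite delta_sym, <- PH by auto.
    apply rsum_ext; intros. rewrite (Hsym u); auto. }
  transitivity (rsum n (fun i => Qf n c P (fun u => delta u i) (col (mmul n H Lm) i))).
  { apply rsum_ext; intros i Hi. rewrite (Q_lin2 n c P _ (fun k => Lm k i) (fun k => col H k)).
    apply Q_ext; auto. intros u Hu. unfold col, mmul. apply rsum_ext; intros; ring. }
  rewrite Q_delta_sum. apply Uf_ext. intros; apply HL; auto.
Qed.

Lemma inner_swap a b i j M : (a < n)%nat -> (b < n)%nat -> (i < n)%nat -> (j < n)%nat ->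
  (forall u v, (u < n)%nat -> (v < n)%nat -> M u v = M v u) ->
  rsum n (fun k => rsum n (fun l => c b i k * c a j l * M k l)) =
  rsum n (fun k => rsum n (fun l => c j a k * c i b l * M k l)).
Proof.
  intros Ha Hb Hi Hj HM. rewrite rsum_comm. apply rsum_ext; intros x Hx; apply rsum_ext; intros y Hy.
  rewrite (anti b i), (anti a j), (HM y x); auto. ring.
Qed.

Lemma W_swap P1 P2 M : (forall u v, (u < n)%nat -> (v < n)%nat -> M u v = M v u) ->
  Wf n c P1 P2 M = Wf n c P2 P1 M.
Proof.
  intros HM. unfold Wf.
  transitivity (rsum n (fun a => rsum n (fun b => rsum n (fun i => rsum n (fun j =>
     P1 a b * P2 i j * rsum n (fun k => rsum n (fun l => c b i k * c a j l * M k l))))))).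
  { do 2 (apply rsum_ext; intros). rewrite scal2. do 2 (apply rsum_ext; intros). ring. }
  rewrite out4, out4.
  do 2 (apply rsum_ext; intros). rewrite scal2. do 2 (apply rsum_ext; intros).
  rewrite inner_swap; auto. ring.
Qed.
End AlgH.

Definition Qn n (P : mat) (x : nat -> R) := rsum n (fun i => rsum n (fun j => x i * P i j * x j)).

Lemma Qn_ext n P x y : (forall i, (i < n)%nat -> x i = y i) -> Qn n P x = Qn n P y.
Proof. intros H. unfold Qn. apply rsum_ext; intros. apply rsum_ext; intros. rewrite !H; auto. Qed.

Lemma Qn_split n P x : (forall i, (i < n)%nat -> P i n = P n i) ->
  Qn (S n) P x = Qn n P x + 2 * x n * rsum n (fun j => P n j * x j) + x n * x n * P n n.
Proof.
  intros Hs. unfold Qn. rewrite rsum_S.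
  transitivity (rsum n (fun i => rsum n (fun j => x i * P i j * x j) + x i * P i n * x n)
     + (rsum n (fun j => x n * P n j * x j) + x n * P n n * x n)).
  { reflexivity. }
  rewrite rsum_plus.
  assert (E1 : rsum n (fun i => x i * P i n * x n) = x n * rsum n (fun j => P n j * x j)).
  { rewrite <- rsum_scal_l. apply rsum_ext; intros. rewrite Hs; auto. ring. }
  assert (E2 : rsum n (fun j => x n * P n j * x j) = x n * rsum n (fun j => P n j * x j)).
  { rewrite <- rsum_scal_l. apply rsum_ext; intros. ring. }
  rewrite E1, E2. ring.
Qed.

Lemma rsum_nonneg n f : (forall i, (i < n)%nat -> 0 <= f i) -> 0 <= rsum n f.
Proof. induction n; intros H; simpl; [lra|]. assert (0 <= f n) by (apply H; lia).
  assert (0 <= rsum n f) by (apply IHn; intros; apply H; lia). lra. Qed.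

Lemma psd_decomp n : forall P : mat,
  (forall a b, (a < n)%nat -> (b < n)%nat -> P a b = P b a) ->
  (forall x, 0 <= Qn n P x) ->
  exists V : mat, forall i j, (i < n)%nat -> (j < n)%nat -> P i j = rsum n (fun r => V r i * V r j).
Proof.
  induction n; intros P Hs Hp.
  - exists (fun _ _ => 0). intros; lia.
  - assert (Hs' : forall i, (i < n)%nat -> P i n = P n i) by (intros; apply Hs; lia).
    set (a := P n n).
    assert (Ha : 0 <= a).
    { assert (H := Hp (fun i => delta i n)). rewrite Qn_split in H; auto.
      rewrite (Qn_ext n P _ (fun _ => 0)) in H. 2:{ intros; apply delta_neq; lia. }
      rewrite rsum_zero in H. 2:{ intros; rewrite delta_neq by lia; ring. }
      rewrite delta_eq in H. unfold Qn in H. rewrite rsum_zero in H. fold a. unfold a. lra.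
      intros; apply rsum_zero; intros; ring. }
    destruct (Rlt_or_le 0 a) as [Hpos|Hz].
    + set (P' := fun i j => P i j - P i n * P j n / a).
      destruct (IHn P') as [V' HV'].
      { intros i j Hi Hj. unfold P'. rewrite (Hs i j) by lia. field. lra. }
      { intros x. set (px := rsum n (fun j => P n j * x j)).
        set (y := fun i => if Nat.eqb i n then - px / a else x i).
        assert (H := Hp y). rewrite Qn_split in H; auto.
        rewrite (Qn_ext n P y x) in H. 2:{ intros i Hi. unfold y. destruct (Nat.eqb_spec i n); [lia|auto]. }
        rewrite (rsum_ext n _ (fun j => P n j * x j)) in H.
        2:{ intros j Hj. unfold y. destruct (Nat.eqb_spec j n); [lia|auto]. }
        fold px in H. unfold y in H. rewrite Nat.eqb_refl in H. fold a in H.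
        assert (E : Qn n P' x = Qn n P x - px * px / a).
        { unfold Qn, P'.
          assert (E1 : rsum n (fun i => x i * P i n) = px).
          { unfold px. apply rsum_ext; intros. rewrite Hs'; auto. ring. }
          assert (E2 : rsum n (fun j => P j n * x j) = px).
          { unfold px. apply rsum_ext; intros. rewrite Hs'; auto. }
          rewrite <- E1 at 1. rewrite <- E2. rewrite rsum_prod.
          unfold Rdiv. rewrite Rmult_comm, scal2. unfold Rminus. rewrite <- rsum_opp, <- rsum_plus.
          apply rsum_ext; intros. rewrite <- rsum_opp, <- rsum_plus. apply rsum_ext; intros. unfold a. ring. }
        rewrite E. replace (Qn n P x - px * px / a) with (Qn n P x + 2 * (- px / a) * px + - px / a * (- px / a) * a) by (field; lra).
        exact H. }
      exists (fun r i => if Nat.ltb r n then (if Nat.ltb i n then V' r i else 0) else P i n / sqrt a).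
      intros i j Hi Hj. rewrite rsum_S. rewrite Nat.ltb_irrefl.
      rewrite (rsum_ext n _ (fun r => (if Nat.ltb i n then V' r i else 0) * (if Nat.ltb j n then V' r j else 0))).
      2:{ intros r Hr. replace (Nat.ltb r n) with true by (symmetry; apply Nat.ltb_lt; auto). reflexivity. }
      assert (Hsq : sqrt a * sqrt a = a) by (apply sqrt_sqrt; lra).
      assert (Hsa : 0 < sqrt a) by (apply sqrt_lt_R0; auto).
      replace (P i n / sqrt a * (P j n / sqrt a)) with (P i n * P j n / a).
      2:{ transitivity (P i n * P j n / (sqrt a * sqrt a)). { rewrite Hsq. reflexivity. } field. lra. }
      destruct (Nat.ltb_spec i n); destruct (Nat.ltb_spec j n).
      * rewrite <- HV' by auto. unfold P'. field. lra.
      * assert (j = n) by lia. subst j. rewrite rsum_zero by (intros; ring).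
        rewrite (Hs i n) by lia. fold a. field. lra.
      * assert (i = n) by lia. subst i. rewrite rsum_zero by (intros; ring). rewrite (Hs n j) by lia. fold a. field. lra.
      * assert (i = n) by lia. assert (j = n) by lia. subst. rewrite rsum_zero by (intros; ring). fold a. field. lra.
    + assert (Ha0 : a = 0) by lra.
      assert (Qd : forall N lam i, (i < N)%nat -> Qn N P (fun k => lam * delta k i) = lam * lam * P i i).
      { intros N lam i Hi. unfold Qn.
        rewrite (rsum_ext N _ (fun k => lam * delta k i * rsum N (fun j => P k j * (lam * delta j i)))).
        2:{ intros. rewrite <- rsum_scal_l. apply rsum_ext; intros; ring. }
        rewrite (rsum_ext N _ (fun k => (lam * rsum N (fun j => P k j * (lam * delta j i))) * delta k i)) by (intros; ring).
        rewrite (rsum_delta_r N i (fun k => lam * rsum N (fun j => P k j * (lam * delta j i)))) by auto.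
        rewrite (rsum_ext N _ (fun j => (lam * P i j) * delta j i)) by (intros; ring).
        rewrite (rsum_delta_r N i (fun j => lam * P i j)) by auto. ring. }
      assert (Pii : forall i, (i < S n)%nat -> 0 <= P i i).
      { intros i Hi. assert (H := Hp (fun k => 1 * delta k i)). rewrite Qd in H; auto. lra. }
      assert (Pin : forall i, (i < n)%nat -> P n i = 0).
      { intros i Hi. 
        assert (Hq : forall lam, 0 <= lam * lam * P i i + 2 * lam * P n i).
        { intros lam. assert (H := Hp (fun k => lam * delta k i + delta k n)). rewrite Qn_split in H; auto.
          rewrite (Qn_ext n P _ (fun k => lam * delta k i)) in H.
          2:{ intros k Hk. rewrite (delta_neq k n) by lia. ring. }
          rewrite Qd in H by auto.
          rewrite (rsum_ext n _ (fun j => (lam * P n j) * delta j i)) in H.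
          2:{ intros j Hj. rewrite (delta_neq j n) by lia. ring. }
          rewrite (rsum_delta_r n i (fun j => lam * P n j)) in H by auto.
          rewrite (delta_neq n i) in H by lia. rewrite delta_eq in H. fold a in H. rewrite Ha0 in H. lra. }
        assert (H0 := Pii i ltac:(lia)).
        assert (H1 := Hq (- P n i / (P i i + 1))).
        assert (Hpos : 0 < P i i + 1) by lra.
        replace (- P n i / (P i i + 1) * (- P n i / (P i i + 1)) * P i i + 2 * (- P n i / (P i i + 1)) * P n i)
          with (- (P n i * P n i) * (P i i + 2) / ((P i i + 1) * (P i i + 1))) in H1 by (field; lra).
        assert (0 <= - (P n i * P n i) * (P i i + 2)).
        { apply Rmult_le_reg_r with (/ ((P i i + 1) * (P i i + 1))).
          apply Rinv_0_lt_compat. nra. rewrite Rmult_0_l. exact H1. }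
        nra. }
      destruct (IHn P) as [V' HV'].
      { intros; apply Hs; lia. }
      { intros x. assert (H := Hp (fun k => if Nat.eqb k n then 0 else x k)). rewrite Qn_split in H; auto.
        rewrite Nat.eqb_refl in H. rewrite (Qn_ext n P _ x) in H. lra.
        intros k Hk. destruct (Nat.eqb_spec k n); [lia|auto]. }
      exists (fun r i => if Nat.ltb r n then (if Nat.ltb i n then V' r i else 0) else 0).
      intros i j Hi Hj. rewrite rsum_S. rewrite Nat.ltb_irrefl.
      rewrite (rsum_ext n _ (fun r => (if Nat.ltb i n then V' r i else 0) * (if Nat.ltb j n then V' r j else 0))).
      2:{ intros r Hr. replace (Nat.ltb r n) with true by (symmetry; apply Nat.ltb_lt; auto). reflexivity. }
      destruct (Nat.ltb_spec i n); destruct (Nat.ltb_spec j n).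
      * rewrite <- HV' by auto. ring.
      * assert (j = n) by lia. subst j. rewrite rsum_zero by (intros; ring).
        rewrite (Hs i n) by lia. rewrite Pin by auto. ring.
      * assert (i = n) by lia. subst i. rewrite rsum_zero by (intros; ring). rewrite Pin by auto. ring.
      * assert (i = n) by lia. assert (j = n) by lia. subst. rewrite rsum_zero by (intros; ring). fold a. rewrite Ha0. ring.
Qed.

Lemma out4b n (f : nat -> nat -> nat -> nat -> R) :
  rsum n (fun a => rsum n (fun b => rsum n (fun c => rsum n (fun d => f a b c d)))) =
  rsum n (fun c => rsum n (fun d => rsum n (fun a => rsum n (fun b => f a b c d)))).
Proof. rewrite out4, out4. reflexivity. Qed.

Lemma psd_trace n P M :
  (forall a b, (a < n)%nat -> (b < n)%nat -> P a b = P b a) ->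
  (forall x, 0 <= Qn n P x) ->
  (forall a b, (a < n)%nat -> (b < n)%nat -> M a b = M b a) ->
  0 <= rsum n (fun i => rsum n (fun k => mmul n P M i k * mmul n P M k i)).
Proof.
  intros Hs Hp HM. destruct (psd_decomp n P Hs Hp) as [V HV].
  assert (E1 : forall i k, (i < n)%nat -> (k < n)%nat ->
     mmul n P M i k = rsum n (fun r => V r i * rsum n (fun j => V r j * M j k))).
  { intros i k Hi Hk. unfold mmul.
    rewrite (rsum_ext n _ (fun j => rsum n (fun r => V r i * V r j * M j k))).
    2:{ intros j Hj. rewrite HV by auto. rewrite <- rsum_scal_r. reflexivity. }
    rewrite rsum_comm. apply rsum_ext; intros. rewrite <- rsum_scal_l. apply rsum_ext; intros. ring. }
  rewrite (rsum_ext n _ (fun i => rsum n (fun k => rsum n (fun r => rsum n (fun s =>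
     V r i * rsum n (fun j => V r j * M j k) * (V s k * rsum n (fun j => V s j * M j i))))))).
  2:{ intros i Hi. apply rsum_ext; intros k Hk. rewrite !E1 by auto. apply rsum_prod. }
  rewrite out4b.
  rewrite (rsum_ext n _ (fun r => rsum n (fun s =>
     rsum n (fun i => V r i * rsum n (fun j => V s j * M j i)) * rsum n (fun k => V s k * rsum n (fun j => V r j * M j k))))).
  2:{ intros r Hr. apply rsum_ext; intros s Hs'. rewrite rsum_prod.
      apply rsum_ext; intros i Hi. apply rsum_ext; intros k Hk. ring. }
  apply rsum_nonneg; intros r Hr; apply rsum_nonneg; intros s Hs'.
  assert (E : rsum n (fun k => V s k * rsum n (fun j => V r j * M j k)) = rsum n (fun i => V r i * rsum n (fun j => V s j * M j i))).
  { rewrite (rsum_ext n _ (fun k => rsum n (fun j => V s k * V r j * M j k))).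
    2:{ intros. rewrite <- rsum_scal_l. apply rsum_ext; intros; ring. }
    rewrite rsum_comm. apply rsum_ext; intros i Hi. rewrite <- rsum_scal_l. apply rsum_ext; intros j Hj.
    rewrite HM by auto. ring. }
  rewrite E. apply Rle_0_sqr.
Qed.

Lemma mat_choice (n : nat) (P : nat -> nat -> R -> Prop) :
  (forall i j, (i < n)%nat -> (j < n)%nat -> exists l, P i j l) ->
  exists X : mat, forall i j, (i < n)%nat -> (j < n)%nat -> P i j (X i j).
Proof.
  intros H.
  assert (H' : forall ij : nat * nat, exists l, ((fst ij < n)%nat /\ (snd ij < n)%nat) -> P (fst ij) (snd ij) l).
  { intros [i j]; simpl. destruct (Compare_dec.lt_dec i n); destruct (Compare_dec.lt_dec j n).
    - destruct (H i j l l0) as [x Hx]. exists x; auto.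
    - exists 0. intros [_ ?]; contradiction.
    - exists 0. intros [? _]; contradiction.
    - exists 0. intros [? _]; contradiction. }
  exists (fun i j => proj1_sig (constructive_indefinite_description _ (H' (i, j)))).
  intros i j Hi Hj. destruct (constructive_indefinite_description _ (H' (i, j))) as [x Hx]. simpl.
  apply Hx; simpl; auto.
Qed.

Lemma mmul_assoc n A B C i j :
  mmul n A (mmul n B C) i j = mmul n (mmul n A B) C i j.
Proof.
  unfold mmul. transitivity (rsum n (fun k => rsum n (fun l => A i k * B k l * C l j))).
  - apply rsum_ext; intros. rewrite <- rsum_scal_l. apply rsum_ext; intros. ring.
  - rewrite rsum_comm. apply rsum_ext; intros. rewrite <- rsum_scal_r. reflexivity.
Qed.

Lemma mmul_scal_r n A B c i j : mmul n A (fun a b => c * B a b) i j = c * mmul n A B i j.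
Proof. unfold mmul. rewrite <- rsum_scal_l. apply rsum_ext; intros; ring. Qed.

Lemma mmul_delta_l n A i j : (i < n)%nat -> mmul n delta A i j = A i j.
Proof. intros. unfold mmul. apply (rsum_delta_l n i (fun k => A k j)); auto. Qed.
Lemma mmul_delta_r n A i j : (j < n)%nat -> mmul n A delta i j = A i j.
Proof. intros. unfold mmul. apply (rsum_delta_r n j (fun k => A i k)); auto. Qed.

Lemma mmul_ext n A A' B B' i j :
  (forall k, (k < n)%nat -> A i k = A' i k) -> (forall k, (k < n)%nat -> B k j = B' k j) ->
  mmul n A B i j = mmul n A' B' i j.
Proof. intros HA HB. unfold mmul. apply rsum_ext. intros. rewrite HA, HB; auto. Qed.

Lemma sumsq_pos n (x : nat -> R) : (exists i, (i < n)%nat /\ x i <> 0) -> rsum n (fun i => x i * x i) > 0.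
Proof.
  induction n; intros [i [Hi Hx]]; [lia|]. simpl.
  assert (H0 : 0 <= rsum n (fun i => x i * x i)).
  { clear. induction n; simpl; [lra|]. assert (0 <= x n * x n) by nra. lra. }
  destruct (Nat.eq_dec i n).
  - subst. assert (0 < x n * x n). { destruct (Rlt_or_le 0 (x n)); [nra|]. destruct (Req_dec (x n) 0); [contradiction|nra]. } lra.
  - assert (rsum n (fun i => x i * x i) > 0) by (apply IHn; exists i; split; [lia|auto]).
    assert (0 <= x n * x n) by nra. lra.
Qed.

Section Basics.
Variables (n : nat) (hn : (1 <= n)%nat) (t0 t1 : R) (g ginv L : R -> mat).
Hypothesis hg_pd : forall t, t0 < t < t1 -> sym_posdef n (g t).
Hypothesis hg_inv1 : forall t, t0 < t < t1 -> forall i j, (i < n)%nat -> (j < n)%nat ->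
      mmul n (g t) (ginv t) i j = delta i j.
Hypothesis hg_inv2 : forall t, t0 < t < t1 -> forall i j, (i < n)%nat -> (j < n)%nat ->
      mmul n (ginv t) (g t) i j = delta i j.
Hypothesis hgL : forall t, t0 < t < t1 -> forall i j, (i < n)%nat -> (j < n)%nat ->
      derivable_pt_lim (fun s => g s i j) t (2 * mmul n (g t) (L t) i j).

Lemma nbhd t : t0 < t < t1 -> exists d, 0 < d /\ forall s, Rabs (s - t) < d -> t0 < s < t1.
Proof.
  intros Ht. exists (Rmin (t - t0) (t1 - t)). split. apply Rmin_pos; lra.
  intros s Hs. assert (H1 := Rmin_l (t - t0) (t1 - t)). assert (H2 := Rmin_r (t - t0) (t1 - t)).
  apply Rabs_def2 in Hs. lra.
Qed.

Lemma gsym t i j : t0 < t < t1 -> (i < n)%nat -> (j < n)%nat -> g t i j = g t j i.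
Proof. intros Ht Hi Hj. apply (proj1 (hg_pd t Ht)); auto. Qed.

Lemma gL_sym t i j : t0 < t < t1 -> (i < n)%nat -> (j < n)%nat ->
  mmul n (g t) (L t) i j = mmul n (g t) (L t) j i.
Proof.
  intros Ht Hi Hj.
  assert (H1 := hgL t Ht i j Hi Hj). assert (H2 := hgL t Ht j i Hj Hi).
  assert (H3 : derivable_pt_lim (fun s => g s i j) t (2 * mmul n (g t) (L t) j i)).
  { apply D_ext_loc with (fun s => g s j i); auto. destruct (nbhd t Ht) as [d [Hd Hs]].
    exists d; split; auto. intros s Hs'. apply gsym; auto. }
  assert (E := D_uniq _ _ _ _ H1 H3). lra.
Qed.

Lemma ginv_sym t i j : t0 < t < t1 -> (i < n)%nat -> (j < n)%nat -> ginv t i j = ginv t j i.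
Proof.
  intros Ht Hi Hj.
  set (T := fun a b => ginv t b a).
  assert (HT : forall a b, (a < n)%nat -> (b < n)%nat -> mmul n T (g t) a b = delta a b).
  { intros a b Ha Hb. rewrite delta_sym, <- (hg_inv1 t Ht b a Hb Ha).
    unfold mmul, T. apply rsum_ext. intros k Hk. rewrite (gsym t b k); auto. ring. }
  change (ginv t j i) with (T i j).
  rewrite <- (mmul_delta_r n T i j Hj).
  rewrite (mmul_ext n T T delta (mmul n (g t) (ginv t)) i j); auto.
  2:{ intros k Hk. rewrite hg_inv1; auto. }
  rewrite mmul_assoc. rewrite (mmul_ext n (mmul n T (g t)) delta (ginv t) (ginv t) i j); auto.
  rewrite mmul_delta_l; auto.
Qed.

Lemma sandwich_sym t M i j : t0 < t < t1 -> (i < n)%nat -> (j < n)%nat ->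
  (forall a b, (a < n)%nat -> (b < n)%nat -> M a b = M b a) ->
  mmul n (ginv t) (mmul n M (ginv t)) i j = mmul n (ginv t) (mmul n M (ginv t)) j i.
Proof.
  intros Ht Hi Hj HM. unfold mmul.
  transitivity (rsum n (fun k => rsum n (fun l => ginv t i k * M k l * ginv t l j))).
  { apply rsum_ext; intros. rewrite <- rsum_scal_l. apply rsum_ext; intros. ring. }
  rewrite rsum_comm.
  apply rsum_ext; intros l Hl. rewrite <- rsum_scal_l. apply rsum_ext; intros k Hk.
  rewrite (ginv_sym t i k), (ginv_sym t l j), (HM k l); auto. ring.
Qed.

Lemma L_ginv_sym t i j : t0 < t < t1 -> (i < n)%nat -> (j < n)%nat ->
  mmul n (L t) (ginv t) i j = mmul n (L t) (ginv t) j i.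
Proof.
  intros Ht Hi Hj.
  assert (E1 : forall i j, (i < n)%nat -> (j < n)%nat -> mmul n (L t) (ginv t) i j = mmul n (ginv t) (mmul n (mmul n (g t) (L t)) (ginv t)) i j).
  { intros a b Ha Hb. rewrite mmul_assoc. apply mmul_ext; auto. intros k Hk. rewrite mmul_assoc.
    rewrite (mmul_ext n (mmul n (ginv t) (g t)) delta (L t) (L t)); auto.
    rewrite mmul_delta_l; auto. }
  rewrite !E1; auto. apply sandwich_sym; auto. intros; apply gL_sym; auto.
Qed.

Lemma det_g_inv t : t0 < t < t1 -> det n (g t) * det n (ginv t) = 1.
Proof.
  intros Ht. rewrite <- det_mmul. rewrite (det_ext n _ delta). apply det_delta.
  intros; apply hg_inv1; auto.
Qed.

Lemma det_g_ne0 t : t0 < t < t1 -> det n (g t) <> 0.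
Proof. intros Ht E. assert (H := det_g_inv t Ht). rewrite E in H. lra. Qed.

Lemma det_g_pos t : t0 < t < t1 -> 0 < det n (g t).
Proof.
  intros Ht.
  set (p := fun s => det n (fun i j => (1 - s) * delta i j + s * g t i j)).
  assert (Hne : forall s, 0 <= s <= 1 -> p s <> 0).
  { intros s Hs. apply det_posdef. intros x Hx.
    assert (E : rsum n (fun i => rsum n (fun j => x i * ((1 - s) * delta i j + s * g t i j) * x j))
       = (1 - s) * rsum n (fun i => x i * x i) + s * rsum n (fun i => rsum n (fun j => x i * g t i j * x j))).
    { rewrite <- !rsum_scal_l, <- rsum_plus. apply rsum_ext; intros i Hi.
      transitivity (rsum n (fun j => (1 - s) * x i * (delta i j * x j)) + rsum n (fun j => s * (x i * g t i j * x j))).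
      rewrite <- rsum_plus. apply rsum_ext; intros; ring.
      rewrite rsum_scal_l, rsum_delta_l, rsum_scal_l; auto. ring. }
    rewrite E.
    assert (H1 := sumsq_pos n x Hx). assert (H2 := proj2 (hg_pd t Ht) x Hx).
    destruct (Req_dec s 0). subst; lra. nra. }
  assert (Hc : continuity p).
  { intros s. destruct (D_det_ex n (fun s i j => (1 - s) * delta i j + s * g t i j) s) as [l Hl].
    - intros i j _ _. eexists.
      apply D_plus. apply (D_mult (fun s => 1 - s) (fun _ => delta i j)).
      apply D_minus. apply D_const. apply D_id. apply D_const.
      apply (D_mult (fun s => s) (fun _ => g t i j)). apply D_id. apply D_const.
    - apply (D_cont _ _ _ Hl). }
  assert (P0 : p 0 = 1).
  { unfold p. transitivity (det n delta); [apply det_ext; intros; ring | apply det_delta]. }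
  assert (P1 : p 1 = det n (g t)). { unfold p. apply det_ext; intros. ring. }
  destruct (Rlt_or_le 0 (p 1)) as [H|H]; [lra|].
  destruct (Req_dec (p 1) 0) as [H0|H0]. { exfalso; apply (Hne 1); auto; lra. }
  destruct (IVT (fun s => - p s) 0 1) as [z [Hz Hz0]].
  - intros s. apply continuity_pt_opp. apply Hc.
  - lra. - lra. - lra.
  - exfalso. apply (Hne z); auto. lra.
Qed.

Lemma D_detg t : t0 < t < t1 ->
  derivable_pt_lim (fun s => det n (g s)) t (2 * mtr n (L t) * det n (g t)).
Proof.
  intros Ht.
  apply D_ext with (fun s => det n (g t) * det n (mmul n (ginv t) (g s))).
  { intros s. rewrite <- det_mmul. apply det_ext. intros i j Hi Hj.
    rewrite mmul_assoc. rewrite (mmul_ext n _ delta (g s) (g s)); auto.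
    apply mmul_delta_l; auto. }
  replace (2 * mtr n (L t) * det n (g t)) with (det n (g t) * mtr n (fun i j => 2 * L t i j)).
  2:{ unfold mtr. rewrite rsum_scal_l. ring. }
  apply D_scal. apply D_det_id.
  - intros; apply hg_inv2; auto.
  - intros i j Hi Hj. unfold mmul.
    replace (2 * L t i j) with (rsum n (fun k => ginv t i k * (2 * mmul n (g t) (L t) k j))).
    apply D_rsum. intros k Hk. apply D_scal. apply hgL; auto.
    transitivity (2 * mmul n (mmul n (ginv t) (g t)) (L t) i j).
    + rewrite <- mmul_assoc. unfold mmul.
      rewrite <- (rsum_scal_l n 2 (fun k => ginv t i k * rsum n (fun l => g t k l * L t l j))).
      apply rsum_ext; intros; ring.
    + rewrite (mmul_ext n _ delta (L t) (L t)); auto. rewrite mmul_delta_l; auto.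
Qed.

Lemma ginv_ex t i j : t0 < t < t1 -> (i < n)%nat -> (j < n)%nat ->
  exists l, derivable_pt_lim (fun s => ginv s i j) t l.
Proof.
  intros Ht Hi Hj. assert (Hk : exists k, n = S k) by (exists (pred n); lia). destruct Hk as [k Hk].
  destruct (D_det_ex k (fun s => sub (g s) j i) t) as [l1 H1].
  { intros a b Ha Hb. eexists. unfold sub. apply hgL; auto.
    destruct (Nat.ltb a j); lia. destruct (Nat.ltb b i); lia. }
  eexists. apply D_ext_loc with (fun s => (-1) ^ (i + j) * det k (sub (g s) j i) / det (S k) (g s)).
  - destruct (nbhd t Ht) as [d [Hd Hs]]. exists d; split; auto. intros s Hs'.
    assert (Hs2 := Hs s Hs').
    assert (E := det_adj k (g s) (ginv s) ltac:(intros a b Ha Hb; rewrite <- Hk; apply hg_inv1; auto; lia) i j ltac:(lia) ltac:(lia)).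
    rewrite <- Hk in E.
    assert (Hne := det_g_ne0 s Hs2). rewrite <- E. rewrite <- Hk. field. exact Hne.
  - rewrite <- Hk. apply D_div. apply D_scal. exact H1. apply (D_detg t Ht). apply det_g_ne0; auto.
Qed.

Lemma D_ginv t i j : t0 < t < t1 -> (i < n)%nat -> (j < n)%nat ->
  derivable_pt_lim (fun s => ginv s i j) t (- 2 * mmul n (L t) (ginv t) i j).
Proof.
  intros Ht Hi Hj.
  destruct (mat_choice n (fun a b l => derivable_pt_lim (fun s => ginv s a b) t l)) as [X HX].
  { intros; apply ginv_ex; auto. }
  (* derivative of g * ginv is zero *)
  assert (H0 : forall a b, (a < n)%nat -> (b < n)%nat ->
     rsum n (fun k => 2 * mmul n (g t) (L t) a k * ginv t k b + g t a k * X k b) = 0).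
  { intros a b Ha Hb.
    assert (Hd : derivable_pt_lim (fun s => mmul n (g s) (ginv s) a b) t
         (rsum n (fun k => 2 * mmul n (g t) (L t) a k * ginv t k b + g t a k * X k b))).
    { unfold mmul at 1. apply D_rsum. intros k Hk. apply (D_mult (fun s => g s a k) (fun s => ginv s k b)).
      apply hgL; auto. apply HX; auto. }
    assert (Hd2 : derivable_pt_lim (fun s => mmul n (g s) (ginv s) a b) t 0).
    { apply D_ext_loc with (fun _ => delta a b). destruct (nbhd t Ht) as [d [Hd0 Hs]].
      exists d; split; auto. intros s Hs'. rewrite hg_inv1; auto. apply D_const. }
    apply (D_uniq _ _ _ _ Hd Hd2). }
  replace (- 2 * mmul n (L t) (ginv t) i j) with (X i j). apply HX; auto.
  (* X = ginv g X = - 2 ginv (gL) ginv = -2 L ginv *)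
  transitivity (mmul n (mmul n (ginv t) (g t)) X i j).
  { rewrite (mmul_ext n _ delta X X); auto. rewrite mmul_delta_l; auto. }
  rewrite <- mmul_assoc.
  transitivity (mmul n (ginv t) (fun a b => - 2 * mmul n (mmul n (g t) (L t)) (ginv t) a b) i j).
  { apply mmul_ext; auto. intros k Hk. assert (E := H0 k j Hk Hj). rewrite rsum_plus in E.
    assert (E2 : rsum n (fun k0 => 2 * mmul n (g t) (L t) k k0 * ginv t k0 j) = 2 * mmul n (mmul n (g t) (L t)) (ginv t) k j).
    { unfold mmul at 2. rewrite <- rsum_scal_l. apply rsum_ext; intros; ring. }
    change (mmul n (g t) X k j) with (rsum n (fun k0 => g t k k0 * X k0 j)). lra. }
  transitivity (- 2 * mmul n (mmul n (ginv t) (mmul n (g t) (L t))) (ginv t) i j).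
  { rewrite mmul_scal_r, mmul_assoc. reflexivity. }
  f_equal. apply mmul_ext; auto. intros k Hk. rewrite mmul_assoc.
  rewrite (mmul_ext n _ delta (L t) (L t)); auto. apply mmul_delta_l; auto.
Qed.

Variables (m : nat) (c : nat -> nat -> nat -> R).
Hypothesis hanti : forall x y z, (x < n)%nat -> (y < n)%nat -> (z < n)%nat -> c x y z = - c y x z.

Definition KK a b := killing (n + m) c a b.



Lemma W_scal1 k X P2 M : Wf n c (fun a b => k * X a b) P2 M = k * Wf n c X P2 M.
Proof. unfold Wf. rewrite <- rsum_scal_l. apply rsum_ext; intros. rewrite <- rsum_scal_l. apply rsum_ext; intros. ring. Qed.

Lemma W_scal3 k P1 P2 M : Wf n c P1 P2 (fun a b => k * M a b) = k * Wf n c P1 P2 M.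
Proof.
  unfold Wf. symmetry. rewrite scal2. do 2 (apply rsum_ext; intros). rewrite <- Rmult_assoc, (Rmult_comm k), Rmult_assoc. f_equal.
  rewrite scal2. do 2 (apply rsum_ext; intros). rewrite <- Rmult_assoc, (Rmult_comm k), Rmult_assoc. f_equal.
  rewrite scal2. do 2 (apply rsum_ext; intros). ring.
Qed.

Lemma W_ext1 X X' P2 M : (forall a b, (a < n)%nat -> (b < n)%nat -> X a b = X' a b) ->
  Wf n c X P2 M = Wf n c X' P2 M.
Proof. intros HX. unfold Wf. do 2 (apply rsum_ext; intros). rewrite HX; auto. Qed.

Lemma W_ext3 P1 P2 M M' : (forall a b, (a < n)%nat -> (b < n)%nat -> M a b = M' a b) ->
  Wf n c P1 P2 M = Wf n c P1 P2 M'.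
Proof. intros HM. unfold Wf. do 2 (apply rsum_ext; intros). f_equal. do 2 (apply rsum_ext; intros). f_equal.
  do 2 (apply rsum_ext; intros). rewrite HM; auto. Qed.

Lemma D_W (P1 P2 M : R -> mat) P1' P2' M' t :
  (forall a b, (a < n)%nat -> (b < n)%nat -> derivable_pt_lim (fun s => P1 s a b) t (P1' a b)) ->
  (forall a b, (a < n)%nat -> (b < n)%nat -> derivable_pt_lim (fun s => P2 s a b) t (P2' a b)) ->
  (forall a b, (a < n)%nat -> (b < n)%nat -> derivable_pt_lim (fun s => M s a b) t (M' a b)) ->
  derivable_pt_lim (fun s => Wf n c (P1 s) (P2 s) (M s)) t
     (Wf n c P1' (P2 t) (M t) + Wf n c (P1 t) P2' (M t) + Wf n c (P1 t) (P2 t) M').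
Proof.
  intros H1 H2 H3. unfold Wf. eapply D_eq.
  { apply D_rsum; intros a Ha. apply D_rsum; intros b Hb.
    apply (D_mult (fun s => P1 s a b)). apply H1; auto.
    apply D_rsum; intros i Hi. apply D_rsum; intros j Hj.
    apply (D_mult (fun s => P2 s i j)). apply H2; auto.
    apply D_rsum; intros k Hk. apply D_rsum; intros l Hl.
    apply D_scal. apply H3; auto. }
  rewrite sum2_plus. rewrite Rplus_assoc. f_equal. rewrite <- sum2_plus.
  do 2 (apply rsum_ext; intros). rewrite sum2_plus. ring.
Qed.

Lemma scal_split t : t0 < t < t1 ->
  scal n m c (g t) (ginv t) = - / 4 * Wf n c (ginv t) (ginv t) (g t)
     - / 2 * rsum n (fun a => rsum n (fun b => ginv t a b * KK b a)).
Proof.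
  intros Ht. unfold scal, mtr, ricci_endo, mmul.
  transitivity (rsum n (fun i => rsum n (fun k => - / 2 * (ginv t i k * T1f n c (ginv t) (g t) k i)
       + (- / 2 * (ginv t i k * KK k i) + / 4 * (ginv t i k * T3f n c (ginv t) (g t) k i))))).
  { do 2 (apply rsum_ext; intros). unfold ricci_form, T1f, T3f, Qf, cv, col, KK. cbv beta. ring. }
  rewrite !sum2_plus, <- !scal2.
  assert (E1 : rsum n (fun a => rsum n (fun b => ginv t a b * T1f n c (ginv t) (g t) b a)) = Wf n c (ginv t) (ginv t) (g t)).
  { reflexivity. }
  rewrite E1. rewrite sum_PT3, <- W_eq_U.
  1: lra. all: try (intros; apply ginv_sym; auto; fail). all: try (intros; apply gsym; auto; fail).
  all: intros a b Ha Hb; rewrite <- (hg_inv2 t Ht a b Ha Hb); reflexivity.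
Qed.

Lemma trip_ext P Lm A A' : (forall a b, (a < n)%nat -> (b < n)%nat -> A a b = A' a b) ->
  trip n P Lm A = trip n P Lm A'.
Proof. intros HA. unfold trip. do 2 (apply rsum_ext; intros). f_equal. apply mmul_ext; auto. Qed.

Lemma mmul_lin3 P x y z A B C i k :
  mmul n P (fun a b => x * A a b + y * B a b + z * C a b) i k = x * mmul n P A i k + y * mmul n P B i k + z * mmul n P C i k.
Proof. unfold mmul. rewrite <- !rsum_scal_l, <- !rsum_plus. apply rsum_ext; intros; ring. Qed.

Lemma trip_lin3 P Lm x y z A B C :
  trip n P Lm (fun a b => x * A a b + y * B a b + z * C a b) = x * trip n P Lm A + y * trip n P Lm B + z * trip n P Lm C.
Proof.
  unfold trip.
  transitivity (rsum n (fun i => rsum n (fun k => x * (mmul n P A i k * Lm k i) + y * (mmul n P B i k * Lm k i)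
     + z * (mmul n P C i k * Lm k i)))).
  { do 2 (apply rsum_ext; intros). rewrite mmul_lin3. ring. }
  rewrite !sum2_plus, <- !scal2. reflexivity.
Qed.

Lemma D_S t : t0 < t < t1 ->
  derivable_pt_lim (fun s => scal n m c (g s) (ginv s)) t
    (- 2 * rsum n (fun i => rsum n (fun k => ricci_endo n m c (g t) (ginv t) i k * L t k i))).
Proof.
  intros Ht.
  apply D_ext_loc with (fun s => - / 4 * Wf n c (ginv s) (ginv s) (g s)
     - / 2 * rsum n (fun a => rsum n (fun b => ginv s a b * KK b a))).
  { destruct (nbhd t Ht) as [d [Hd Hs]]. exists d; split; auto. intros s Hs'. symmetry. apply scal_split; auto. }
  eapply D_eq.
  { apply D_minus. apply D_scal.
    apply (D_W ginv ginv g (fun a b => - 2 * mmul n (L t) (ginv t) a b) (fun a b => - 2 * mmul n (L t) (ginv t) a b)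
                (fun a b => 2 * mmul n (g t) (L t) a b)).
    all: try (intros; apply D_ginv; auto).
    intros; apply hgL; auto.
    apply D_scal. apply D_rsum; intros a Ha. apply D_rsum; intros b Hb.
    apply (D_mult (fun s => ginv s a b) (fun _ => KK b a)). apply D_ginv; auto. apply D_const. }
  set (P' := fun a b => - 2 * mmul n (L t) (ginv t) a b).
  set (M' := fun a b => 2 * mmul n (g t) (L t) a b).
  assert (Hg : forall a b, (a < n)%nat -> (b < n)%nat -> g t a b = g t b a) by (intros; apply gsym; auto).
  assert (HP : forall a b, (a < n)%nat -> (b < n)%nat -> ginv t a b = ginv t b a) by (intros; apply ginv_sym; auto).
  assert (HPH : forall a b, (a < n)%nat -> (b < n)%nat -> rsum n (fun k => ginv t a k * g t k b) = delta a b).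
  { intros a b Ha Hb; rewrite <- (hg_inv2 t Ht a b Ha Hb); reflexivity. }
  assert (HHL : forall a b, (a < n)%nat -> (b < n)%nat -> mmul n (g t) (L t) a b = mmul n (g t) (L t) b a).
  { intros; apply gL_sym; auto. }
  rewrite (W_swap n c hanti (ginv t) P' (g t) Hg).
  unfold P', M'. rewrite W_scal1, W_scal3.
  rewrite (W_eq_U n c (ginv t) HP). rewrite <- (trip_T3 n c (ginv t) (g t) (L t) Hg HPH HHL).
  assert (E1 : Wf n c (mmul n (L t) (ginv t)) (ginv t) (g t) = trip n (ginv t) (L t) (T1f n c (ginv t) (g t))).
  { rewrite <- LP_trip. reflexivity. }
  assert (E2 : rsum n (fun a => rsum n (fun b => - 2 * mmul n (L t) (ginv t) a b * KK b a + ginv t a b * 0))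
     = - 2 * trip n (ginv t) (L t) KK).
  { rewrite <- LP_trip. rewrite scal2. do 2 (apply rsum_ext; intros). ring. }
  rewrite E1, E2.
  assert (E3 : rsum n (fun i => rsum n (fun k => ricci_endo n m c (g t) (ginv t) i k * L t k i))
     = - / 2 * trip n (ginv t) (L t) (T1f n c (ginv t) (g t)) + - / 2 * trip n (ginv t) (L t) KK
       + / 4 * trip n (ginv t) (L t) (T3f n c (ginv t) (g t))).
  { rewrite <- trip_lin3. apply trip_ext. intros a b Ha Hb.
    unfold ricci_form, T1f, T3f, Qf, cv, col, KK. cbv beta. lra. }
  rewrite E3. lra.
Qed.



Lemma tf_sq A : mtr n (mmul n (tracefree n A) (tracefree n A)) = mtr n (mmul n A A) - (mtr n A) ^ 2 / INR n.
Proof.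
  assert (Hn : INR n <> 0) by (apply not_0_INR; lia).
  assert (E0 : mtr n (mmul n A A) = rsum n (fun i => rsum n (fun k => A i k * A k i))) by reflexivity.
  rewrite E0. unfold mtr at 1. unfold mmul at 1. unfold tracefree.
  transitivity (rsum n (fun i => rsum n (fun k => A i k * A k i + (- (mtr n A / INR n)) * (delta i k * A k i)
        + (- (mtr n A / INR n)) * (A i k * delta k i) + (mtr n A / INR n) ^ 2 * (delta i k * delta k i)))).
  { do 2 (apply rsum_ext; intros). ring. }
  rewrite sum2_lin4.
  assert (E1 : rsum n (fun i => rsum n (fun k => delta i k * A k i)) = mtr n A).
  { apply rsum_ext; intros. apply (rsum_delta_l n i (fun k => A k i)); auto. }
  assert (E2 : rsum n (fun i => rsum n (fun k => A i k * delta k i)) = mtr n A).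
  { apply rsum_ext; intros. apply (rsum_delta_r n i (fun k => A i k)); auto. }
  assert (E3 : rsum n (fun i => rsum n (fun k => delta i k * delta k i)) = INR n).
  { transitivity (rsum n (fun _ => 1)). apply rsum_ext; intros. rewrite (rsum_delta_l n i (fun k => delta k i)); auto. apply delta_eq.
    rewrite rsum_const; ring. }
  rewrite E1, E2, E3. field; auto.
Qed.

Lemma D_V t : t0 < t < t1 ->
  derivable_pt_lim (fun s => Rpower (sqrt (det n (g s))) (2 / INR n)) t
    (2 / INR n * mtr n (L t) * Rpower (sqrt (det n (g t))) (2 / INR n)).
Proof.
  intros Ht. assert (Hn : INR n <> 0) by (apply not_0_INR; lia).
  assert (HD := det_g_pos t Ht). assert (Hs := sqrt_lt_R0 _ HD).
  assert (Hss := sqrt_sqrt _ (Rlt_le _ _ HD)).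
  unfold Rpower. eapply D_eq.
  { apply D_exp_comp. apply D_scal. apply D_ln_comp. exact Hs. apply D_sqrt_comp. exact HD. apply D_detg; auto. }
  field_simplify; try lra. rewrite <- Hss at 2. field. lra.
Qed.

Variables (eps : R) (Ld : R -> mat) (du : R -> R).
Hypothesis hLd : forall t, t0 < t < t1 -> forall i j, (i < n)%nat -> (j < n)%nat ->
      derivable_pt_lim (fun s => L s i j) t (Ld t i j).
Hypothesis heq1 : forall t, t0 < t < t1 -> forall i j, (i < n)%nat -> (j < n)%nat ->
      ricci_endo n m c (g t) (ginv t) i j - Ld t i j
        + (du t - mtr n (L t)) * L t i j + eps / 2 * delta i j = 0.

Lemma D_Q t : t0 < t < t1 ->
  derivable_pt_lim (fun s => mtr n (mmul n (tracefree n (L s)) (tracefree n (L s)))) t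
    (2 * rsum n (fun i => rsum n (fun k => L t i k * Ld t k i)) - 2 * mtr n (L t) * mtr n (Ld t) / INR n).
Proof.
  intros Ht. assert (Hn : INR n <> 0) by (apply not_0_INR; lia).
  apply D_ext with (fun s => rsum n (fun i => rsum n (fun k => L s i k * L s k i)) - mtr n (L s) * mtr n (L s) * / INR n).
  { intros s. rewrite tf_sq. change (mtr n (mmul n (L s) (L s))) with (rsum n (fun i => rsum n (fun k => L s i k * L s k i))). unfold Rdiv. ring. }
  assert (HT : derivable_pt_lim (fun s => mtr n (L s)) t (mtr n (Ld t))).
  { unfold mtr. apply D_rsum. intros; apply hLd; auto. }
  eapply D_eq.
  { apply D_minus. apply D_rsum; intros i Hi. apply D_rsum; intros k Hk.
    apply (D_mult (fun s => L s i k) (fun s => L s k i)); apply hLd; auto.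
    apply (D_mult (fun s => mtr n (L s) * mtr n (L s)) (fun _ => / INR n)).
    apply (D_mult (fun s => mtr n (L s)) (fun s => mtr n (L s))); exact HT. apply D_const. }
  f_equal.
  - rewrite sum2_plus.
    assert (E : rsum n (fun i => rsum n (fun k => Ld t i k * L t k i)) = rsum n (fun i => rsum n (fun k => L t i k * Ld t k i))).
    { rewrite rsum_comm. do 2 (apply rsum_ext; intros). ring. }
    rewrite E. ring.
  - field; auto.
Qed.

Lemma D_F t : t0 < t < t1 ->
  derivable_pt_lim (fun s => Rpower (sqrt (det n (g s))) (2 / INR n) *
      (scal n m c (g s) (ginv s) + mtr n (mmul n (tracefree n (L s)) (tracefree n (L s))))) t
    (- 2 * Rpower (sqrt (det n (g t))) (2 / INR n) * mtr n (mmul n (tracefree n (L t)) (tracefree n (L t)))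
       * ((- du t + mtr n (L t)) - / INR n * mtr n (L t))).
Proof.
  intros Ht. assert (Hn : INR n <> 0) by (apply not_0_INR; lia).
  eapply D_eq.
  { apply D_mult. apply D_V; auto. apply D_plus. apply D_S; auto. apply D_Q; auto. }
  set (rho := rsum n (fun i => rsum n (fun k => ricci_endo n m c (g t) (ginv t) i k * L t k i))).
  set (Z := rsum n (fun i => rsum n (fun k => L t i k * L t k i))).
  set (T := mtr n (L t)).
  assert (HLd : forall i j, (i < n)%nat -> (j < n)%nat ->
     Ld t i j = ricci_endo n m c (g t) (ginv t) i j + (du t - T) * L t i j + eps / 2 * delta i j).
  { intros i j Hi Hj. assert (H := heq1 t Ht i j Hi Hj). unfold T. lra. }
  assert (E1 : rsum n (fun i => rsum n (fun k => L t i k * Ld t k i)) = rho + (du t - T) * Z + eps / 2 * T).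
  { transitivity (rsum n (fun i => rsum n (fun k => L t i k * ricci_endo n m c (g t) (ginv t) k i
        + (du t - T) * (L t i k * L t k i) + eps / 2 * (L t i k * delta k i) + 0 * 0))).
    { do 2 (apply rsum_ext; intros). rewrite HLd by auto. ring. }
    rewrite sum2_lin4.
    assert (E : rsum n (fun i => rsum n (fun k => L t i k * delta k i)) = T).
    { unfold T, mtr. apply rsum_ext; intros. apply (rsum_delta_r n i (fun k => L t i k)); auto. }
    assert (E' : rsum n (fun i => rsum n (fun k => L t i k * ricci_endo n m c (g t) (ginv t) k i)) = rho).
    { unfold rho. rewrite rsum_comm. do 2 (apply rsum_ext; intros). ring. }
    rewrite E, E'. fold Z. ring. }
  assert (E2 : mtr n (Ld t) = scal n m c (g t) (ginv t) + (du t - T) * T + eps / 2 * INR n).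
  { unfold mtr at 1. transitivity (rsum n (fun i => ricci_endo n m c (g t) (ginv t) i i + (du t - T) * L t i i + eps / 2 * 1)).
    { apply rsum_ext; intros. rewrite HLd, delta_eq; auto. }
    rewrite !rsum_plus, rsum_scal_l, rsum_const. unfold scal, T, mtr. ring. }
  assert (E3 : mtr n (mmul n (tracefree n (L t)) (tracefree n (L t))) = Z - T ^ 2 / INR n).
  { rewrite tf_sq. reflexivity. }
  rewrite E1, E2, E3. fold T. field; auto.
Qed.

Lemma L0sq_nonneg t : t0 < t < t1 ->
  0 <= mtr n (mmul n (tracefree n (L t)) (tracefree n (L t))).
Proof.
  intros Ht.
  set (L0 := tracefree n (L t)).
  set (M := mmul n (g t) L0).
  assert (HL0 : forall i k, (i < n)%nat -> (k < n)%nat -> L0 i k = mmul n (ginv t) M i k).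
  { intros i k Hi Hk. unfold M. rewrite mmul_assoc.
    rewrite (mmul_ext n _ delta L0 L0); auto. rewrite mmul_delta_l; auto. }
  assert (HM : forall a b, (a < n)%nat -> (b < n)%nat -> M a b = M b a).
  { assert (E : forall a b, (a < n)%nat -> (b < n)%nat -> M a b = mmul n (g t) (L t) a b - mtr n (L t) / INR n * g t a b).
    { intros a b Ha Hb. unfold M, L0, tracefree, mmul.
      rewrite (rsum_ext n _ (fun k => g t a k * L t k b + (- (mtr n (L t) / INR n)) * (g t a k * delta k b))) by (intros; ring).
      rewrite rsum_plus, rsum_scal_l, (rsum_delta_r n b (fun k => g t a k)); auto. ring. }
    intros a b Ha Hb. rewrite !E by auto. rewrite gL_sym, (gsym t a b); auto. }
  assert (Hpsd : forall x, 0 <= Qn n (ginv t) x).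
  { intros x.
    set (y := fun a => rsum n (fun i => x i * ginv t i a)).
    assert (E : Qn n (ginv t) x = Qn n (g t) y).
    { unfold Qn.
      rewrite (rsum_ext n _ (fun i => rsum n (fun j => rsum n (fun a => rsum n (fun b => x i * ginv t i a * g t a b * ginv t b j * x j))))).
      2:{ intros i Hi. apply rsum_ext; intros j Hj.
          assert (Ep : ginv t i j = mmul n (ginv t) (mmul n (g t) (ginv t)) i j).
          { rewrite (mmul_ext n (ginv t) (ginv t) (mmul n (g t) (ginv t)) delta); auto. rewrite mmul_delta_r; auto. }
          rewrite Ep. unfold mmul. rewrite (rsum_sandwich n (x i) (x j)). apply rsum_ext; intros a Ha.
          rewrite <- rsum_scal_l, rsum_sandwich. apply rsum_ext; intros; ring. }
      rewrite out4b. apply rsum_ext; intros a Ha. apply rsum_ext; intros b Hb.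
      rewrite (rsum_ext n _ (fun i => rsum n (fun j => (x i * ginv t i a * g t a b) * (ginv t b j * x j)))).
      2:{ intros; apply rsum_ext; intros; ring. }
      rewrite <- rsum_prod, rsum_scal_r. unfold y. f_equal. apply rsum_ext; intros. rewrite (ginv_sym t b); auto. ring. }
    rewrite E. destruct (classic (exists a, (a < n)%nat /\ y a <> 0)) as [Hy|Hy].
    - apply Rlt_le. apply (proj2 (hg_pd t Ht)). exact Hy.
    - unfold Qn. right. symmetry. apply rsum_zero; intros a Ha. apply rsum_zero; intros b Hb.
      assert (y a = 0). { apply NNPP. intros Hne. apply Hy. exists a. auto. } rewrite H. ring. }
  change (0 <= rsum n (fun i => rsum n (fun k => L0 i k * L0 k i))).
  rewrite (rsum_ext n _ (fun i => rsum n (fun k => mmul n (ginv t) M i k * mmul n (ginv t) M k i))).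
  2:{ intros i Hi. apply rsum_ext; intros k Hk. rewrite !HL0; auto. }
  apply psd_trace; auto. intros; apply ginv_sym; auto.
Qed.

End Basics.

Theorem mainTheorem7
  (n m : nat) (hn : (1 <= n)%nat)
  (c : nat -> nat -> nat -> R)
  (hlie : is_lie_algebra (n + m) c)
  (hcpt : compact_type (n + m) c)
  (hred : reductive n m c)
  (hbg : k_invariant n m c (fun i j => delta i j))
  (eps : R) (t0 t1 : R) (ht : t0 < t1)
  (g ginv L Ld : R -> mat) (u du ddu : R -> R)
  (hg_pd : forall t, t0 < t < t1 -> sym_posdef n (g t))
  (hg_inv1 : forall t, t0 < t < t1 -> forall i j, (i < n)%nat -> (j < n)%nat ->
      mmul n (g t) (ginv t) i j = delta i j)
  (hg_inv2 : forall t, t0 < t < t1 -> forall i j, (i < n)%nat -> (j < n)%nat ->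
      mmul n (ginv t) (g t) i j = delta i j)
  (hg_inv : forall t, t0 < t < t1 -> k_invariant n m c (g t))
  (hgL : forall t, t0 < t < t1 -> forall i j, (i < n)%nat -> (j < n)%nat ->
      derivable_pt_lim (fun s => g s i j) t (2 * mmul n (g t) (L t) i j))
  (hLd : forall t, t0 < t < t1 -> forall i j, (i < n)%nat -> (j < n)%nat ->
      derivable_pt_lim (fun s => L s i j) t (Ld t i j))
  (hu : forall t, t0 < t < t1 -> derivable_pt_lim u t (du t))
  (hdu : forall t, t0 < t < t1 -> derivable_pt_lim du t (ddu t))
  (heq1 : forall t, t0 < t < t1 -> forall i j, (i < n)%nat -> (j < n)%nat ->
      ricci_endo n m c (g t) (ginv t) i j - Ld t i j
        + (du t - mtr n (L t)) * L t i j + eps / 2 * delta i j = 0)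
  (heq2 : forall t, t0 < t < t1 ->
      - mtr n (Ld t) - mtr n (mmul n (L t) (L t)) + ddu t + eps / 2 = 0)
  (hcons : exists C : R, forall t, t0 < t < t1 ->
      ddu t + (- du t + mtr n (L t)) * du t - eps * u t = C) :
  let v := fun t => sqrt (det n (g t)) in
  let S := fun t => scal n m c (g t) (ginv t) in
  let L0sq := fun t => mtr n (mmul n (tracefree n (L t)) (tracefree n (L t))) in
  let xi := fun t => - du t + mtr n (L t) in
  let F := fun t => Rpower (v t) (2 / INR n) * (S t + L0sq t) in
  (forall t, t0 < t < t1 ->
     derivable_pt_lim F t
       (- 2 * Rpower (v t) (2 / INR n) * L0sq t * (xi t - / INR n * mtr n (L t)))) /\
  (forall a b, t0 < a -> a <= b -> b < t1 ->
     (forall s, a <= s <= b -> xi s <= / INR n * mtr n (L s)) ->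
     F a <= F b).
Proof.
  intros v S L0sq xi F.
  assert (hanti : forall x y z, (x < n)%nat -> (y < n)%nat -> (z < n)%nat -> c x y z = - c y x z).
  { intros x y z Hx Hy Hz. apply (proj1 hlie); lia. }
  assert (HD : forall t, t0 < t < t1 -> derivable_pt_lim F t
       (- 2 * Rpower (v t) (2 / INR n) * L0sq t * (xi t - / INR n * mtr n (L t)))).
  { intros t Ht. unfold F, v, S, L0sq, xi.
    eapply D_F; eauto. }
  split; [exact HD|].
  intros a b Ha Hab Hb Hxi.
  destruct (Req_dec a b) as [E|E]. { subst; lra. }
  destruct (MVT_cor2 F (fun t => - 2 * Rpower (v t) (2 / INR n) * L0sq t * (xi t - / INR n * mtr n (L t))) a b)
    as [z [Hz Hz2]].
  - lra.
  - intros z Hz. apply HD. lra.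
  - assert (H1 : 0 < Rpower (v z) (2 / INR n)) by (unfold Rpower; apply exp_pos).
    assert (H2 : 0 <= L0sq z).
    { unfold L0sq. eapply L0sq_nonneg; eauto. lra. }
    assert (H3 := Hxi z ltac:(lra)).
    assert (H4 : 0 <= - 2 * Rpower (v z) (2 / INR n) * L0sq z * (xi z - / INR n * mtr n (L z))).
    { replace (- 2 * Rpower (v z) (2 / INR n) * L0sq z * (xi z - / INR n * mtr n (L z)))
        with (2 * Rpower (v z) (2 / INR n) * L0sq z * (/ INR n * mtr n (L z) - xi z)) by ring.
      apply Rmult_le_pos. apply Rmult_le_pos. lra. exact H2. lra. }
    assert (H5 : 0 <= b - a) by lra.
    assert (0 <= (- 2 * Rpower (v z) (2 / INR n) * L0sq z * (xi z - / INR n * mtr n (L z))) * (b - a))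
      by (apply Rmult_le_pos; auto).
    lra.
Qed.
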